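(* Let $a,x\in \mathcal{A}$. Then the following are equivalent: (1) $x$ is the $w$-weighted core inverse of $a$. (2) $xwawx=x$, $(wawx)^*=wawx$, $x\mathcal{A}=(aw)\mathcal{A}$, $x^*\mathcal{A}=(waw)\mathcal{A}$. (3) $xwawx=x$, $(wawx)^*=wawx$, ${}^0(x)={}^0(aw)$, ${}^0(x^* )={}^0(waw)$. (4) $xwawx=x$, $(wawx)^*=wawx$, ${}^0(x)={}^0(aw)$, ${}^0(x^* )\subseteq {}^0(waw)$.
   Context: $\mathcal{A}$ is a complex Banach *-algebra with identity and $w\in\mathcal{A}$. The $w$-weighted core inverse of $a$ is the unique $x$ with $a(wx)^2=x$, $(wawx)^*=wawx$, $xw(aw)^2=aw$. ${}^0(b)=\{y\in\mathcal{A}: yb=0\}$ is the left annihilator of $b$. *)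

(* Defs.v *)
From mathcomp Require Import all_boot all_order all_algebra.
Set Implicit Arguments. Unset Strict Implicit. Unset Printing Implicit Defensive.
Import GRing.Theory.
Local Open Scope ring_scope.

(* An involution on a unital ring: additive, anti-multiplicative, involutive.
   (Every complex Banach *-algebra with identity is such a ring.) *)
Definition is_involution (R : pzRingType) (star : R -> R) : Prop :=
  [/\ forall x y : R, star (x + y) = star x + star y,
      forall x y : R, star (x * y) = star y * star x
    & forall x : R, star (star x) = x].

Definition w_core_inverse (R : pzRingType) (star : R -> R) (w a x : R) : Prop :=
  [/\ a * (w * x) ^+ 2 = x,
      star (w * a * w * x) = w * a * w * x
    & x * w * (a * w) ^+ 2 = a * w].

Definition lann (R : pzRingType) (b : R) : R -> Prop := fun y => y * b = 0.

Definition rideal (R : pzRingType) (b : R) : R -> Prop := fun z => exists t, z = b * t.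

Definition set_eq (R : Type) (P Q : R -> Prop) : Prop := forall z, P z <-> Q z.
Definition set_sub (R : Type) (P Q : R -> Prop) : Prop := forall z, P z -> Q z.

(* Main.v *)
Require Import Defs.
From mathcomp Require Import all_boot all_order all_algebra.
Import GRing.Theory.
Local Open Scope ring_scope.

Lemma rid_lann (R : pzRingType) (b c : R) :
  set_eq (rideal b) (rideal c) -> set_eq (lann b) (lann c).
Proof.
move=> H.
have [t Ht] : rideal c b by apply/H; exists 1; rewrite mulr1.
have [s Hs] : rideal b c by apply/H; exists 1; rewrite mulr1.
move=> y; rewrite /lann; split=> E.
  by rewrite Hs mulrA E mul0r.
by rewrite Ht mulrA E mul0r.
Qed.

Section S.
Variables (R : pzRingType) (star : R -> R).
Hypothesis hs : is_involution star.

Lemma starM x y : star (x * y) = star y * star x.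
Proof. by case: hs. Qed.
Lemma starK x : star (star x) = x.
Proof. by case: hs. Qed.
Lemma starD x y : star (x + y) = star x + star y.
Proof. by case: hs. Qed.
Lemma star0 : star 0 = 0.
Proof. have h := starD 0 0; rewrite addr0 in h. by apply: (addrI (star 0)); rewrite -h addr0. Qed.
Lemma starN x : star (- x) = - star x.
Proof. by apply/eqP; rewrite -subr_eq0 opprK -starD addNr star0. Qed.
Lemma star1 : star 1 = 1.
Proof.
have h : star 1 * star (star 1) = star (star 1 * 1) by rewrite starM.
by rewrite starK mulr1 starK in h.
Qed.
Lemma starB1 x : star (1 - x) = 1 - star x.
Proof. by rewrite starD starN star1. Qed.

Variables (w a x : R).

Lemma c1c2 : w_core_inverse star w a x ->
  [/\ x * w * a * w * x = x,
       star (w * a * w * x) = w * a * w * x,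
       set_eq (rideal x) (rideal (a * w))
     & set_eq (rideal (star x)) (rideal (w * a * w))].
Proof.
case=> [h1 h2 h3]; rewrite !expr2 in h1 h3.
have e1 : x * w * a * w * x = x.
  transitivity (x * w * a * w * (a * (w * x * (w * x)))); first by rewrite h1.
  transitivity ((x * w * (a * w * (a * w))) * (x * w * x)); first by rewrite !mulrA.
  by rewrite h3 -[RHS]h1 !mulrA.
have e2 : a * w * x * w * (a * w) = a * w.
  transitivity (a * w * x * w * (x * w * (a * w * (a * w)))); first by rewrite h3.
  transitivity ((a * (w * x * (w * x))) * w * (a * w * (a * w))); first by rewrite !mulrA.
  by rewrite h1.
have e3 : w * a * w * x * star x = star x.
  by rewrite -h2 -starM !mulrA e1.
split=> // z; rewrite /rideal; split=> [[t ->]|[t ->]].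
- by exists (x * w * x * t); rewrite -{1}h1 !mulrA.
- by exists (w * a * w * a * w * t); rewrite -{1}h3 !mulrA.
- by exists (x * star x * t); rewrite -{1}e3 !mulrA.
- exists (star (w * a * w) * (w * a * w) * t).
  rewrite !mulrA.
  have -> : star x * star (w * a * w) = w * a * w * x by rewrite -starM h2.
  transitivity (w * (a * w * x * w * (a * w)) * t); first by rewrite e2 !mulrA.
  by rewrite !mulrA.
Qed.

Lemma c4c1 : [/\ x * w * a * w * x = x,
       star (w * a * w * x) = w * a * w * x,
       set_eq (lann x) (lann (a * w))
     & set_sub (lann (star x)) (lann (w * a * w))] ->
   w_core_inverse star w a x.
Proof.
case=> [e1 h2 L S].
have f3 : a * w = x * w * a * w * (a * w).
  have : lann (a * w) (1 - x * w * a * w).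
    by apply/L; rewrite /lann mulrBl mul1r e1 subrr.
  by rewrite /lann mulrBl mul1r => /eqP; rewrite subr_eq0 => /eqP.
have f : w * a * w = w * a * w * x * (w * a * w).
  have : lann (w * a * w) (1 - w * a * w * x).
    apply/S; rewrite /lann mulrBl mul1r -{1}h2 -starM.
    by rewrite !mulrA e1 subrr.
  by rewrite /lann mulrBl mul1r => /eqP; rewrite subr_eq0 => /eqP.
have g : a * w * x * w * (a * w) = a * w.
  transitivity ((x * w * a * w * (a * w)) * x * w * (a * w)); first by rewrite -f3.
  transitivity (x * w * a * (w * a * w * x * (w * a * w))); first by rewrite !mulrA.
  by rewrite -f f3 !mulrA.
have h1 : x = a * w * x * w * x.
  have : lann x (1 - a * w * x * w).
    by apply/L; rewrite /lann mulrBl mul1r g subrr.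
  by rewrite /lann mulrBl mul1r => /eqP; rewrite subr_eq0 => /eqP.
split=> //.
- by rewrite expr2 [RHS]h1 !mulrA.
- by rewrite expr2 [RHS]f3 !mulrA.
Qed.
End S.

Theorem theorem2p1 (R : pzRingType) (star : R -> R) (w a x : R) :
  is_involution star ->
  (w_core_inverse star w a x <->
   [/\ x * w * a * w * x = x,
       star (w * a * w * x) = w * a * w * x,
       set_eq (rideal x) (rideal (a * w))
     & set_eq (rideal (star x)) (rideal (w * a * w))]) /\
  (w_core_inverse star w a x <->
   [/\ x * w * a * w * x = x,
       star (w * a * w * x) = w * a * w * x,
       set_eq (lann x) (lann (a * w))
     & set_eq (lann (star x)) (lann (w * a * w))]) /\
  (w_core_inverse star w a x <->
   [/\ x * w * a * w * x = x,
       star (w * a * w * x) = w * a * w * x,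
       set_eq (lann x) (lann (a * w))
     & set_sub (lann (star x)) (lann (w * a * w))]).
Proof.
move=> hs.
have c12 := @c1c2 R star hs w a x.
have c41 := @c4c1 R star hs w a x.
have c23 : [/\ x * w * a * w * x = x,
       star (w * a * w * x) = w * a * w * x,
       set_eq (rideal x) (rideal (a * w))
     & set_eq (rideal (star x)) (rideal (w * a * w))] ->
   [/\ x * w * a * w * x = x,
       star (w * a * w * x) = w * a * w * x,
       set_eq (lann x) (lann (a * w))
     & set_eq (lann (star x)) (lann (w * a * w))].
  by case=> ? ? ? ?; split=> //; apply: rid_lann.
have c34 : [/\ x * w * a * w * x = x,
       star (w * a * w * x) = w * a * w * x,
       set_eq (lann x) (lann (a * w))
     & set_eq (lann (star x)) (lann (w * a * w))] ->
   [/\ x * w * a * w * x = x,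
       star (w * a * w * x) = w * a * w * x,
       set_eq (lann x) (lann (a * w))
     & set_sub (lann (star x)) (lann (w * a * w))].
  by case=> ? ? ? H; split=> // z /H.
split; last split; split.
- exact: c12.
- by move=> H; apply: c41; apply: c34; apply: c23.
- by move=> H; apply: c23; apply: c12.
- by move=> H; apply: c41; apply: c34.
- by move=> H; apply: c34; apply: c23; apply: c12.
- exact: c41.
Qed.
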